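(* Let $p$ be a prime number and $\Gamma$ a group. If $\Gamma$ is Jordan (respectively, nilpotently Jordan of class at most $c$), then $\Gamma$ is $p$-Jordan (respectively, nilpotently $p$-Jordan of class at most $c$).
   Context: A group $\Gamma$ is Jordan if there is a constant $J(\Gamma)$ such that every finite subgroup of $\Gamma$ contains a normal abelian subgroup of index at most $J(\Gamma)$; it is nilpotently Jordan of class at most $c$ if there is $J(\Gamma)$ such that every finite subgroup contains a normal subgroup of index at most $J(\Gamma)$ that is nilpotent of class at most $c$. For a prime $p$, $\Gamma$ is $p$-Jordan (respectively, nilpotently $p$-Jordan of class at most $c$) if there exist constants $J(\Gamma)$, $e(\Gamma)$ such that every finite subgroup $G$ of $\Gamma$ contains a normal subgroup $N$ of order coprime to $p$ and index at most $J(\Gamma)\cdot|G_p|^{e(\Gamma)}$ with $N$ abelian (respectively, nilpotent of class at most $c$), where $G_p$ is a $p$-Sylow subgroup of $G$. *)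

(* Defs.v *)
From HB Require Import structures.
From mathcomp Require Import all_boot all_fingroup all_solvable.
Set Implicit Arguments. Unset Strict Implicit. Unset Printing Implicit Defensive.
Import GroupScope.

Definition is_group (T : Type) (mul : T -> T -> T) (one : T) (inv : T -> T) : Prop :=
  [/\ forall x y z, mul x (mul y z) = mul (mul x y) z,
      forall x, mul one x = x &
      forall x, mul (inv x) x = one].

(* A finite subgroup of T is represented as the injective homomorphic image
   of a finite group G : {group gT}; every finite subgroup arises this way. *)
Definition fin_embedding (T : Type) (mul : T -> T -> T)
    (gT : finGroupType) (G : {group gT}) (f : gT -> T) : Prop :=
  {in G &, injective f} /\ {in G &, forall x y, f (x * y) = mul (f x) (f y)}.

Definition Jordan (T : Type) (mul : T -> T -> T) : Prop :=
  exists J : nat, forall (gT : finGroupType) (G : {group gT}) (f : gT -> T),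
    fin_embedding mul G f ->
    exists N : {group gT}, [/\ N <| G, abelian N & #|G : N| <= J].

Definition nilJordan (T : Type) (mul : T -> T -> T) (c : nat) : Prop :=
  exists J : nat, forall (gT : finGroupType) (G : {group gT}) (f : gT -> T),
    fin_embedding mul G f ->
    exists N : {group gT},
      [/\ N <| G, nilpotent N, nil_class N <= c & #|G : N| <= J].

Definition pJordan (T : Type) (mul : T -> T -> T) (p : nat) : Prop :=
  exists J e : nat, forall (gT : finGroupType) (G : {group gT}) (f : gT -> T),
    fin_embedding mul G f ->
    exists N : {group gT},
      [/\ N <| G, coprime #|N| p, abelian N &
          forall P : {group gT}, P \in 'Syl_p(G) -> #|G : N| <= J * #|P| ^ e].

Definition nilpJordan (T : Type) (mul : T -> T -> T) (p c : nat) : Prop :=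
  exists J e : nat, forall (gT : finGroupType) (G : {group gT}) (f : gT -> T),
    fin_embedding mul G f ->
    exists N : {group gT},
      [/\ N <| G, coprime #|N| p, nilpotent N, nil_class N <= c &
          forall P : {group gT}, P \in 'Syl_p(G) -> #|G : N| <= J * #|P| ^ e].

(* Main.v *)
Require Import Defs.
From mathcomp Require Import all_boot all_fingroup all_solvable.

Import GroupScope.

Lemma nil_classS (gT : finGroupType) (H G : {group gT}) :
  H \subset G -> nilpotent G -> nil_class H <= nil_class G.
Proof.
move=> sHG nG.
apply/(lcn_nil_classP _ (nilpotentS sHG nG)).
apply/trivgP; rewrite -(lcn_nil_classP _ nG (leqnn _)).
exact: lcnS.
Qed.

Lemma core_step (p : nat) (gT : finGroupType) (G N : {group gT}) :
  prime p -> N <| G -> nilpotent N ->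
  [/\ 'O_(p^')(N) <| G, coprime #|'O_(p^')(N)| p, nilpotent 'O_(p^')(N),
      nil_class 'O_(p^')(N) <= nil_class N &
      forall P : {group gT}, P \in 'Syl_p(G) ->
        #|G : 'O_(p^')(N)| <= #|G : N| * #|P| ^ 1].
Proof.
move=> pp nNG nilN.
have sON : 'O_(p^')(N) \subset N := pcore_sub _ _.
split.
- exact: char_normal_trans (pcore_char _ _) nNG.
- rewrite coprime_sym prime_coprime //.
  by rewrite -p'natE //; exact: pcore_pgroup.
- exact: nilpotentS sON nilN.
- exact: nil_classS.
move=> P; rewrite inE => sylP.
rewrite expn1 -(Lagrange_index (normal_sub nNG) sON) leq_mul2l.
apply/orP; right.
have hall := nilpotent_pcore_Hall (p^') nilN.
have idx : #|N : 'O_(p^')(N)| = (#|N|`_p)%N.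
  apply/eqP; rewrite -(@eqn_pmul2l ((#|N|)`_(p^'))%N); last exact: part_gt0.
  rewrite -(card_Hall hall) Lagrange //.
  by rewrite (card_Hall hall) mulnC partnC.
rewrite idx (card_Hall sylP).
apply: dvdn_leq; first exact: part_gt0.
apply: partn_dvd; first exact: cardG_gt0.
exact: cardSg (normal_sub nNG).
Qed.

Theorem corollary2p6 (p : nat) (T : Type) (mul : T -> T -> T) (one : T)
    (inv : T -> T) :
  prime p -> is_group mul one inv ->
  (Jordan mul -> pJordan mul p) /\
  (forall c : nat, nilJordan mul c -> nilpJordan mul p c).
Proof.
move=> pp _; split.
  case=> J HJ; exists J, 1%N => gT G f emb.
  have [N [nNG abN iN]] := HJ gT G f emb.
  have [nOG cO _ _ iO] := @core_step _ _ _ _ pp nNG (abelian_nil abN).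
  exists 'O_(p^')(N)%G; split => //.
    exact: abelianS (pcore_sub _ _) abN.
  move=> P sP; apply: leq_trans (iO P sP) _.
  by rewrite leq_mul2r iN orbT.
move=> c [J HJ]; exists J, 1%N => gT G f emb.
have [N [nNG nilN cN iN]] := HJ gT G f emb.
have [nOG cO nO clO iO] := @core_step _ _ _ _ pp nNG nilN.
exists 'O_(p^')(N)%G; split => //.
  exact: leq_trans clO cN.
move=> P sP; apply: leq_trans (iO P sP) _.
by rewrite leq_mul2r iN orbT.
Qed.
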